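(* Consider the model below with $\min\{M,M_f,N\}<1$ and $\epsilon_2\ge0$, fix all parameters other than $\epsilon_1$, and let $\delta:=(M-1)(1-M_f\beta)+\lambda\sigma N$. (i) There exists $\bar{\epsilon}_{BR,RPE}\in[-\infty,\infty)$, depending only on the model parameters, such that a bounded-rationality restricted-perceptions equilibrium (BR-RPE) exists if and only if $\epsilon_1\ge\bar{\epsilon}_{BR,RPE}$. (ii) If $\delta<0$, then $\bar{\epsilon}_{BR,RPE}=-\infty$. (iii) Let $\bar{\epsilon}_{BR}\in[-\infty,\infty)$ be the number such that a bounded-rationality equilibrium (BRE) exists if and only if $\epsilon_1\ge\bar{\epsilon}_{BR}$. If either ($\delta\ge0$ and $p+q\ge1$) or $\delta<0$, then $\bar{\epsilon}_{BR}\ge\bar{\epsilon}_{BR,RPE}$.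
   Context: Parameters: $0<\beta<1$, $\sigma,\lambda,\mu>0$, $\psi>1$, $M,M_f,N\in(0,1]$, $p,q\in(0,1]$ with $(p,q)\neq(1,1)$. The shock $\epsilon_t$ is a two-state Markov chain on $\{\epsilon_1,\epsilon_2\}$ with $\Pr(\epsilon_{t+1}=\epsilon_1\mid\epsilon_t=\epsilon_1)=p$, $\Pr(\epsilon_{t+1}=\epsilon_2\mid\epsilon_t=\epsilon_2)=q$; $\bar q:=(1-p)/(2-p-q)$. Model: $x_t=M\hat E_t x_{t+1}-\sigma(i_t-N\hat E_t\pi_{t+1})+\epsilon_t$, $\pi_t=\lambda x_t+M_f\beta\hat E_t\pi_{t+1}$, $i_t=\max\{\psi\pi_t,-\mu\}$. Say $Y_j=(x_j,\pi_j)$, $j=1,2$, solves the model given forecasts $Y^e_j=(x^e_j,\pi^e_j)$ if for $j=1,2$, with $i_j=\max\{\psi\pi_j,-\mu\}$: $x_j=Mx^e_j-\sigma(i_j-N\pi^e_j)+\epsilon_j$ and $\pi_j=\lambda x_j+M_f\beta\pi^e_j$. A BRE is $(Y_1,Y_2)$ solving the model given $Y^e_1=pY_1+(1-p)Y_2$, $Y^e_2=(1-q)Y_1+qY_2$. A BR-RPE is $(Y_1,Y_2)$ solving the model given $Y^e_1=Y^e_2=\bar qY_2+(1-\bar q)Y_1$. *)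

(* Defs.v *)
From Stdlib Require Import Reals.
Open Scope R_scope.

Definition rate (psi mu pi : R) : R := Rmax (psi * pi) (- mu).

Definition solves (beta sigma lam mu psi M Mf N : R) (eps x pi xe pie : R) : Prop :=
  x = M * xe - sigma * (rate psi mu pi - N * pie) + eps /\
  pi = lam * x + Mf * beta * pie.

Definition BRE_exists (beta sigma lam mu psi M Mf N p q eps1 eps2 : R) : Prop :=
  exists x1 pi1 x2 pi2 : R,
    solves beta sigma lam mu psi M Mf N eps1 x1 pi1
      (p * x1 + (1 - p) * x2) (p * pi1 + (1 - p) * pi2) /\
    solves beta sigma lam mu psi M Mf N eps2 x2 pi2
      ((1 - q) * x1 + q * x2) ((1 - q) * pi1 + q * pi2).

Definition qbar (p q : R) : R := (1 - p) / (2 - p - q).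

Definition BRRPE_exists (beta sigma lam mu psi M Mf N p q eps1 eps2 : R) : Prop :=
  exists x1 pi1 x2 pi2 : R,
    let xe := qbar p q * x2 + (1 - qbar p q) * x1 in
    let pie := qbar p q * pi2 + (1 - qbar p q) * pi1 in
    solves beta sigma lam mu psi M Mf N eps1 x1 pi1 xe pie /\
    solves beta sigma lam mu psi M Mf N eps2 x2 pi2 xe pie.

(* Thresholds in [-oo, oo): None encodes -oo, Some e the real e. *)
Definition ge_thr (eps : R) (t : option R) : Prop :=
  match t with None => True | Some e => e <= eps end.

Definition le_thr (a b : option R) : Prop :=
  match a, b with
  | None, _ => True
  | Some _, None => False
  | Some x, Some y => x <= y
  end.

Definition delta (beta sigma lam M Mf N : R) : R :=
  (M - 1) * (1 - Mf * beta) + lam * sigma * N.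

(* Main.v *)
Require Import Defs.
From Stdlib Require Import Reals Lra Psatz Classical.
Open Scope R_scope.


Definition hh (s m z : R) : R := Rmin (z + m) (s * z).
Definition zk (s m : R) : R := - m / (1 - s).
Definition FF (s m a u b1 b2 P : R) : R :=
  (1 - a) * hh s m (u * P + b1) + a * hh s m (u * P + b2) - P.

Section H.
Set Default Proof Using "All".
Variables (s m : R).
Hypothesis Hs : 0 < s < 1.
Hypothesis Hm : 0 < m.

Lemma hh_left z : z <= zk s m -> hh s m z = z + m.
Proof.
  intro H. unfold hh. apply Rmin_left.
  assert ((1-s)*z <= (1-s)*zk s m) by (apply Rmult_le_compat_l; lra).
  replace ((1-s)*zk s m) with (-m) in H0 by (unfold zk; field; lra). lra.
Qed.

Lemma hh_right z : zk s m <= z -> hh s m z = s * z.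
Proof.
  intro H. unfold hh. apply Rmin_right.
  assert ((1-s)*zk s m <= (1-s)*z) by (apply Rmult_le_compat_l; lra).
  replace ((1-s)*zk s m) with (-m) in H0 by (unfold zk; field; lra). lra.
Qed.

Lemma hh_low a b : a <= b -> s * (b - a) <= hh s m b - hh s m a.
Proof.
  intro H. unfold hh, Rmin.
  destruct (Rle_dec (b + m) (s*b)); destruct (Rle_dec (a+m) (s*a)); nra.
Qed.

Lemma hh_up a b : a <= b -> hh s m b - hh s m a <= b - a.
Proof.
  intro H. unfold hh, Rmin.
  destruct (Rle_dec (b + m) (s*b)); destruct (Rle_dec (a+m) (s*a)); nra.
Qed.

Lemma hh_mono a b : a <= b -> hh s m a <= hh s m b.
Proof. intro H. pose proof (hh_low a b H). nra. Qed.

Lemma hh_le_s z : hh s m z <= s * z.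
Proof. unfold hh. apply Rmin_r. Qed.

Lemma hh_ge_z z : z <= 0 -> z <= hh s m z.
Proof. intro H. unfold hh, Rmin. destruct (Rle_dec (z + m) (s*z)); nra. Qed.

Lemma hh_nonneg z : 0 <= z -> 0 <= hh s m z.
Proof. intro H. unfold hh, Rmin. destruct (Rle_dec (z + m) (s*z)); nra. Qed.

Lemma hh_abs a b : Rabs (hh s m a - hh s m b) <= Rabs (a - b).
Proof.
  destruct (Rle_dec a b).
  - pose proof (hh_low a b r); pose proof (hh_up a b r).
    rewrite !Rabs_left1; nra.
  - pose proof (hh_low b a ltac:(lra)); pose proof (hh_up b a ltac:(lra)).
    rewrite !Rabs_right; nra.
Qed.
End H.

Lemma lip_cont (f : R -> R) (K : R) : 0 < K ->
  (forall x y, Rabs (f x - f y) <= K * Rabs (x - y)) -> continuity f.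
Proof.
  intros HK Hf x. unfold continuity_pt, continue_in, limit1_in, limit_in.
  intros eps He. exists (eps / (2*K)). split.
  - apply Rdiv_lt_0_compat; lra.
  - intros y [_ Hy]. simpl in *. unfold Rdist in *.
    eapply Rle_lt_trans. apply Hf.
    apply Rlt_le_trans with (K * (eps / (2*K))).
    apply Rmult_lt_compat_l; lra.
    replace (K * (eps / (2 * K))) with (eps/2) by (field; lra). lra.
Qed.

Section F.
Set Default Proof Using "All".
Variables (s m a u b1 b2 : R).
Hypothesis Hs : 0 < s < 1.
Hypothesis Hm : 0 < m.
Hypothesis Ha : 0 <= a <= 1.
Hypothesis Hu : 0 < u.
Hypothesis Hsu : s * u < 1.

Lemma FF_cont : continuity (FF s m a u b1 b2).
Proof.
  apply (lip_cont _ (u + 1)); [lra|]. intros x y. unfold FF.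
  pose proof (hh_abs s m Hs Hm (u*x+b1) (u*y+b1)).
  pose proof (hh_abs s m Hs Hm (u*x+b2) (u*y+b2)).
  replace (u * x + b1 - (u * y + b1)) with (u*(x-y)) in H by ring.
  replace (u * x + b2 - (u * y + b2)) with (u*(x-y)) in H0 by ring.
  rewrite Rabs_mult, (Rabs_right u) in H, H0 by lra.
  set (A1 := hh s m (u*x+b1)) in *. set (A2 := hh s m (u*y+b1)) in *.
  set (B1 := hh s m (u*x+b2)) in *. set (B2 := hh s m (u*y+b2)) in *.
  replace ((1 - a) * A1 + a * B1 - x - ((1 - a) * A2 + a * B2 - y))
    with ((1-a)*(A1 - A2) + a*(B1-B2) - (x - y)) by ring.
  eapply Rle_trans. apply Rabs_triang.
  rewrite Rabs_Ropp.
  eapply Rle_trans. apply Rplus_le_compat_r. apply Rabs_triang.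
  rewrite !Rabs_mult, (Rabs_right (1-a)), (Rabs_right a) by lra.
  nra.
Qed.

Lemma FF_root P0 : 0 <= FF s m a u b1 b2 P0 -> exists P, FF s m a u b1 b2 P = 0.
Proof.
  intro H0. destruct (Req_dec (FF s m a u b1 b2 P0) 0) as [E|E].
  { exists P0; exact E. }
  set (c := 1 - s*u).
  set (P1 := Rabs P0 + 1 + s * (Rabs b1 + Rabs b2) / c).
  assert (Hc : 0 < c) by (unfold c; lra).
  assert (HP1 : P0 < P1).
  { unfold P1. assert (0 <= s * (Rabs b1 + Rabs b2) / c).
    { apply Rmult_le_pos; [|left; apply Rinv_0_lt_compat; lra].
      pose proof (Rabs_pos b1); pose proof (Rabs_pos b2); nra. }
    pose proof (Rle_abs P0). lra. }
  assert (HF1 : FF s m a u b1 b2 P1 < 0).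
  { unfold FF.
    pose proof (hh_le_s s m Hs Hm (u*P1+b1)). pose proof (hh_le_s s m Hs Hm (u*P1+b2)).
    assert (FF s m a u b1 b2 P1 <= s*(u*P1 + (1-a)*b1 + a*b2) - P1).
    { unfold FF. nra. }
    unfold FF in H1.
    assert (c * P1 = c * (Rabs P0 + 1) + s * (Rabs b1 + Rabs b2)).
    { unfold P1. field. lra. }
    assert (s * ((1-a)*b1 + a*b2) <= s * (Rabs b1 + Rabs b2)).
    { apply Rmult_le_compat_l; [lra|].
      pose proof (Rle_abs b1); pose proof (Rle_abs b2);
      pose proof (Rabs_pos b1); pose proof (Rabs_pos b2).
      pose proof (Rle_abs (-b1)); pose proof (Rle_abs (-b2)).
      rewrite Rabs_Ropp in *. nra. }
    pose proof (Rabs_pos P0).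
    assert (0 < c * (Rabs P0 + 1)) by nra.
    unfold c in *. nra. }
  destruct (IVT (fun P => - FF s m a u b1 b2 P) P0 P1) as [z [Hz1 Hz2]].
  - apply continuity_opp. apply FF_cont.
  - exact HP1.
  - lra.
  - lra.
  - exists z. lra.
Qed.

Lemma FF_mono_b1 b1' P : b1 <= b1' -> FF s m a u b1 b2 P <= FF s m a u b1' b2 P.
Proof.
  intro H. unfold FF.
  pose proof (hh_mono s m Hs Hm (u*P+b1) (u*P+b1') ltac:(lra)). nra.
Qed.

Lemma FF_lip_b1 b1' P : b1 <= b1' -> FF s m a u b1' b2 P - FF s m a u b1 b2 P <= b1' - b1.
Proof.
  intro H. unfold FF.
  pose proof (hh_up s m Hs Hm (u*P+b1) (u*P+b1') ltac:(lra)).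
  pose proof (hh_low s m Hs Hm (u*P+b1) (u*P+b1') ltac:(lra)). nra.
Qed.
End F.

Section M.
Set Default Proof Using "All".
Variables (s m a u : R).
Hypothesis Hs : 0 < s < 1.
Hypothesis Hm : 0 < m.
Hypothesis Ha : 0 <= a <= 1.
Hypothesis Hu : 1 <= u.
Hypothesis Hsu : s * u < 1.

Lemma FF_max_ord b1 b2 P : b2 <= b1 ->
  FF s m a u b1 b2 P <= FF s m a u b1 b2 ((zk s m - b1)/u) \/
  FF s m a u b1 b2 P <= FF s m a u b1 b2 ((zk s m - b2)/u).
Proof.
  intro Hb. set (z := zk s m).
  set (K1 := (z - b1)/u). set (K2 := (z - b2)/u).
  assert (E1 : u*K1 + b1 = z) by (unfold K1; field; lra).
  assert (E2 : u*K2 + b2 = z) by (unfold K2; field; lra).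
  assert (HK : K1 <= K2).
  { unfold K1, K2, Rdiv. apply Rmult_le_compat_r. left; apply Rinv_0_lt_compat; lra. lra. }
  assert (Hzs : z + m = s * z) by (unfold z, zk; field; lra).
  assert (L : forall w, w <= z -> hh s m w = w + m) by (intros; apply hh_left; auto).
  assert (R' : forall w, z <= w -> hh s m w = s * w) by (intros; apply hh_right; auto).
  assert (F1 : FF s m a u b1 b2 K1 = (1-a)*(s*z) + a*(u*K1+b2+m) - K1).
  { unfold FF. rewrite E1, R', L by nra. ring. }
  assert (F2 : FF s m a u b1 b2 K2 = (1-a)*(s*(u*K2+b1)) + a*(z+m) - K2).
  { unfold FF. rewrite E2, R', L by nra. ring. }
  rewrite F1, F2. unfold FF.
  destruct (Rle_dec P K1) as [H1|H1].
  - rewrite (L (u*P+b1)), (L (u*P+b2)) by nra.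
    left. assert ((u-1)*(K1 - P) >= 0) by nra.
    assert (s*z = u*K1+b1+m) by lra. rewrite H0. nra.
  - destruct (Rle_dec P K2) as [H2|H2].
    + rewrite (R' (u*P+b1)), (L (u*P+b2)) by nra.
      set (c := (1-a)*s*u + a*u - 1).
      destruct (Rle_dec 0 c).
      * right. assert (c*(K2 - P) >= 0) by nra.
        assert ((1 - a) * (s * (u * P + b1)) + a * (u * P + b2 + m) - P =
                (1 - a) * (s * (u * K2 + b1)) + a * (u*K2+b2 + m) - K2 - c*(K2-P)).
        { unfold c. ring. }
        rewrite E2 in H0. lra.
      * left. assert (c*(P - K1) <= 0) by nra.
        assert ((1 - a) * (s * (u * P + b1)) + a * (u * P + b2 + m) - P =
                (1 - a) * (s * (u*K1+b1)) + a * (u*K1 + b2 + m) - K1 + c*(P-K1)).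
        { unfold c. ring. }
        rewrite E1 in H0. lra.
    + rewrite (R' (u*P+b1)), (R' (u*P+b2)) by nra.
      right.
      assert ((s*u - 1)*(P - K2) <= 0) by nra.
      assert ((1 - a) * (s * (u * P + b1)) + a * (s * (u * P + b2)) - P =
              (1 - a) * (s * (u * K2 + b1)) + a * (s*(u*K2+b2)) - K2 + (s*u-1)*(P-K2)).
      { ring. }
      rewrite E2 in H0. assert (a*(s*z) = a*(z+m)) by (rewrite Hzs; ring). lra.
Qed.

End M.

Lemma FF_max s m a u b1 b2 P : 0 < s < 1 -> 0 < m -> 0 <= a <= 1 -> 1 <= u -> s * u < 1 ->
  FF s m a u b1 b2 P <= FF s m a u b1 b2 ((zk s m - b1)/u) \/
  FF s m a u b1 b2 P <= FF s m a u b1 b2 ((zk s m - b2)/u).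
Proof.
  intros Hs Hm Ha Hu Hsu.
  destruct (Rle_dec b2 b1). apply FF_max_ord; auto.
  assert (Hsym : forall Q, FF s m a u b1 b2 Q = FF s m (1-a) u b2 b1 Q)
    by (intro; unfold FF; ring).
  rewrite !Hsym.
  destruct (FF_max_ord s m (1-a) u Hs Hm ltac:(lra) Hu Hsu b2 b1 P); auto; lra.
Qed.

Section G.
Set Default Proof Using "All".
Variables (L psi mu : R).
Hypothesis HL : 0 < L.
Hypothesis Hpsi : 0 < psi.
Hypothesis Hmu : 0 < mu.

Let k := 1 + L * psi.
Let s := / k.
Lemma sk : s * k = 1.
Proof. unfold s, k. field. nra. Qed.
Lemma kpos : 1 < k.
Proof. unfold k. nra. Qed.

Lemma gh1 p : hh s (L*mu) (p + L * rate psi mu p) = p.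
Proof.
  pose proof sk; pose proof kpos.
  unfold rate, Rmax. destruct (Rle_dec (psi*p) (-mu)).
  - unfold hh. rewrite Rmin_left; [ring|].
    apply (Rmult_le_reg_l k); [lra|].
    replace (k * (s * (p + L * - mu))) with ((s*k)*(p - L*mu)) by ring.
    replace (k * (p + L * - mu + L * mu)) with (k*p) by ring.
    rewrite H. unfold k. nra.
  - unfold hh. rewrite Rmin_right.
    + replace (p + L*(psi*p)) with (k*p) by (unfold k; ring).
      rewrite <- Rmult_assoc, (Rmult_comm s k). unfold s. rewrite Rinv_r by lra. ring.
    + replace (p + L*(psi*p)) with (k*p) by (unfold k; ring).
      rewrite <- Rmult_assoc, (Rmult_comm s k). unfold s. rewrite Rinv_r by lra.
      unfold k. nra.
Qed.

Lemma gh2 z : z = hh s (L*mu) z + L * rate psi mu (hh s (L*mu) z).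
Proof.
  pose proof sk; pose proof kpos.
  unfold hh, Rmin. destruct (Rle_dec (z + L*mu) (s*z)).
  -
    assert (psi*(z + L*mu) <= -mu).
    { assert (k*(z+L*mu) <= k*(s*z)) by (apply Rmult_le_compat_l; lra).
      replace (k*(s*z)) with ((s*k)*z) in H1 by ring. rewrite H in H1.
      unfold k in H1.
      assert (L*(psi*(z+L*mu) + mu) <= 0) by nra.
      nra. }
    unfold rate. rewrite Rmax_right by lra. ring.
  - assert (-mu <= psi*(s*z)).
    { assert (k*(s*z) < k*(z+L*mu)) by (apply Rmult_lt_compat_l; lra).
      replace (k*(s*z)) with ((s*k)*z) in H1 by ring. rewrite H in H1.
      unfold k in H1.
      assert (0 < L*(psi*(z+L*mu) + mu) ) by nra.
      assert (psi*(z + L*mu) + mu > 0) by nra.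
      assert (z = k*(s*z)) by (replace (k*(s*z)) with ((s*k)*z) by ring; rewrite H; ring).
      unfold k in H4. nra. }
    unfold rate. rewrite Rmax_left by lra.
    replace (s*z + L*(psi*(s*z))) with ((s*k)*z) by (unfold k; ring). rewrite H. ring.
Qed.

Lemma gh_inj p z : z = p + L * rate psi mu p -> p = hh s (L*mu) z.
Proof. intro H. rewrite H. symmetry. apply gh1. Qed.
End G.

Section Model.
Set Default Proof Using "All".
Variables (beta sigma lam mu psi M Mf N p q eps2 : R).
Hypotheses (Hbeta : 0 < beta < 1) (Hsigma : 0 < sigma) (Hlam : 0 < lam) (Hmu : 0 < mu)
  (Hpsi : 1 < psi)
  (HM : 0 < M <= 1) (HMf : 0 < Mf <= 1) (HN : 0 < N <= 1)
  (Hp : 0 < p <= 1) (Hq : 0 < q <= 1) (Hpq : ~ (p = 1 /\ q = 1))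
  (Heps2 : 0 <= eps2).

Let ss := / (1 + lam * sigma * psi).
Let mm := lam * sigma * mu.
Let dd := delta beta sigma lam M Mf N.
Let uu := 1 + dd.
Let aa := qbar p q.

Lemma Hpq2 : 0 < 2 - p - q.
Proof. destruct (Req_dec p 1); destruct (Req_dec q 1); try tauto; lra. Qed.

Lemma Hss : 0 < ss < 1.
Proof.
  unfold ss. assert (0 < lam*sigma*psi) by (apply Rmult_lt_0_compat; nra).
  split. apply Rinv_0_lt_compat; lra.
  rewrite <- Rinv_1. apply Rinv_lt_contravar; lra.
Qed.
Lemma Hmm : 0 < mm.
Proof. unfold mm. apply Rmult_lt_0_compat; nra. Qed.
Lemma Haa : 0 <= aa <= 1.
Proof.
  pose proof Hpq2. unfold aa, qbar. split.
  apply Rmult_le_pos; [lra| left; apply Rinv_0_lt_compat; lra].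
  apply (Rmult_le_reg_r (2-p-q)); [lra|]. unfold Rdiv. rewrite Rmult_assoc, Rinv_l by lra. lra.
Qed.
Lemma Huu : 0 < uu.
Proof.
  unfold uu, dd, delta.
  assert (0 < Mf*beta < 1) by (split; nra).
  assert (0 < lam*sigma*N) by (apply Rmult_lt_0_compat; nra).
  nra.
Qed.
Lemma Huu_le : uu <= 1 + lam*sigma*N.
Proof.
  unfold uu, dd, delta. assert (0 < Mf*beta < 1) by (split; nra). nra.
Qed.
Lemma Hsu : ss * uu < 1.
Proof.
  pose proof Huu. pose proof Huu_le. pose proof Hss.
  assert (lam*sigma*N < lam*sigma*psi).
  { apply Rmult_lt_compat_l. nra. lra. }
  unfold ss. apply (Rmult_lt_reg_l (1 + lam*sigma*psi)). nra.
  rewrite <- Rmult_assoc, Rinv_r by nra. lra.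
Qed.

Definition Sx (e1 : R) : Prop :=
  exists P, 0 <= FF ss mm aa uu (lam*e1) (lam*eps2) P.

Lemma gh1' pi : hh ss mm (pi + lam*sigma * rate psi mu pi) = pi.
Proof.
  unfold ss, mm. apply gh1; nra.
Qed.
Lemma gh2' z : z = hh ss mm z + lam*sigma * rate psi mu (hh ss mm z).
Proof.
  unfold ss, mm. apply gh2; nra.
Qed.

Lemma RPE_iff e1 :
  BRRPE_exists beta sigma lam mu psi M Mf N p q e1 eps2 <->
  exists P, FF ss mm aa uu (lam*e1) (lam*eps2) P = 0.
Proof.
  split.
  - intros (x1 & pi1 & x2 & pi2 & H). cbv zeta in H.
    destruct H as [[H1 H2] [H3 H4]].
    fold aa in H1; fold aa in H2; fold aa in H3; fold aa in H4.
    set (P := aa * pi2 + (1 - aa) * pi1) in *.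
    set (xe := aa * x2 + (1 - aa) * x1) in *.
    assert (Hxe : lam * xe = P - Mf*beta*P).
    { unfold xe. replace (lam * (aa * x2 + (1 - aa) * x1)) with (aa*(lam*x2) + (1-aa)*(lam*x1)) by ring.
      replace (lam*x2) with (pi2 - Mf*beta*P) by lra.
      replace (lam*x1) with (pi1 - Mf*beta*P) by lra. unfold P. ring. }
    assert (G1 : pi1 + lam*sigma*rate psi mu pi1 = uu*P + lam*e1).
    { assert (E : lam*x1 = lam*(M * xe - sigma * (rate psi mu pi1 - N * P) + e1))
        by (rewrite <- H1; reflexivity).
      replace (lam*(M * xe - sigma * (rate psi mu pi1 - N * P) + e1)) with
        (M*(lam*xe) - lam*sigma*rate psi mu pi1 + lam*sigma*N*P + lam*e1) in E by ring.
      rewrite Hxe in E. unfold uu, dd, delta. lra. }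
    assert (G2 : pi2 + lam*sigma*rate psi mu pi2 = uu*P + lam*eps2).
    { assert (E : lam*x2 = lam*(M * xe - sigma * (rate psi mu pi2 - N * P) + eps2))
        by (rewrite <- H3; reflexivity).
      replace (lam*(M * xe - sigma * (rate psi mu pi2 - N * P) + eps2)) with
        (M*(lam*xe) - lam*sigma*rate psi mu pi2 + lam*sigma*N*P + lam*eps2) in E by ring.
      rewrite Hxe in E. unfold uu, dd, delta. lra. }
    exists P. unfold FF. rewrite <- G1, <- G2, !gh1'. unfold P. ring.
  - intros [P HP].
    set (pi1 := hh ss mm (uu*P + lam*e1)).
    set (pi2 := hh ss mm (uu*P + lam*eps2)).
    assert (G1 := gh2' (uu*P + lam*e1)). fold pi1 in G1.
    assert (G2 := gh2' (uu*P + lam*eps2)). fold pi2 in G2.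
    assert (HPi : aa * pi2 + (1 - aa) * pi1 = P) by (unfold FF in HP; fold pi1 pi2 in HP; lra).
    exists ((pi1 - Mf*beta*P)/lam), pi1, ((pi2 - Mf*beta*P)/lam), pi2.
    cbv zeta. fold aa. rewrite HPi.
    assert (Hxe : aa * ((pi2 - Mf * beta * P) / lam) + (1 - aa) * ((pi1 - Mf * beta * P) / lam)
                  = (P - Mf*beta*P)/lam).
    { rewrite <- HPi at 3. field. lra. }
    rewrite Hxe. unfold solves.
    assert (R1 : rate psi mu pi1 = (uu*P + lam*e1 - pi1)/(lam*sigma)) by (field_simplify_eq; nra).
    assert (R2 : rate psi mu pi2 = (uu*P + lam*eps2 - pi2)/(lam*sigma)) by (field_simplify_eq; nra).
    rewrite R1, R2. unfold uu, dd, delta.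
    split; split; field; nra.
Qed.

Lemma RPE_Sx e1 :
  BRRPE_exists beta sigma lam mu psi M Mf N p q e1 eps2 <-> Sx e1.
Proof.
  rewrite RPE_iff. unfold Sx. split.
  - intros [P HP]. exists P. lra.
  - intros [P HP]. eapply FF_root; eauto using Hss, Hmm, Haa, Huu, Hsu.
Qed.

Lemma Sx_up x y : Sx x -> x <= y -> Sx y.
Proof.
  intros [P HP] Hxy. exists P.
  eapply Rle_trans; [exact HP|]. apply FF_mono_b1; auto using Hss, Hmm, Haa, Huu, Hsu.
  nra.
Qed.

Lemma Sx_nonneg x : 0 <= x -> Sx x.
Proof.
  intro Hx. exists 0. unfold FF. pose proof Haa.
  pose proof (hh_nonneg ss mm Hss Hmm (uu*0 + lam*x) ltac:(nra)).
  pose proof (hh_nonneg ss mm Hss Hmm (uu*0 + lam*eps2) ltac:(nra)).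
  nra.
Qed.

Lemma Sx_neg x : dd < 0 -> Sx x.
Proof.
  intro Hd. pose proof Huu. pose proof Haa.
  set (B := lam * Rabs x + lam * Rabs eps2).
  assert (HB : 0 <= B) by (unfold B; pose proof (Rabs_pos x); pose proof (Rabs_pos eps2); nra).
  set (T := B * (/uu + / (-dd))).
  assert (H1 : B <= uu * T).
  { unfold T. replace (uu * (B * (/ uu + / - dd))) with (B + B * (uu / (-dd))) by (field; lra).
    assert (0 <= B * (uu / - dd)) by (apply Rmult_le_pos; [lra| unfold Rdiv; apply Rmult_le_pos; [lra| left; apply Rinv_0_lt_compat; lra]]).
    lra. }
  assert (H2 : B <= (-dd) * T).
  { unfold T. replace ((-dd) * (B * (/ uu + / - dd))) with (B + B * ((-dd) / uu)) by (field; lra).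
    assert (0 <= B * (-dd / uu)) by (apply Rmult_le_pos; [lra| unfold Rdiv; apply Rmult_le_pos; [lra| left; apply Rinv_0_lt_compat; lra]]).
    lra. }
  assert (Hx1 : lam * x <= lam * Rabs x) by (apply Rmult_le_compat_l; [lra| apply Rle_abs]).
  assert (Hx2 : lam * eps2 <= lam * Rabs eps2) by (apply Rmult_le_compat_l; [lra| apply Rle_abs]).
  assert (Hx3 : - (lam * x) <= lam * Rabs x).
  { replace (- (lam*x)) with (lam * (-x)) by ring. apply Rmult_le_compat_l; [lra|].
    rewrite <- Rabs_Ropp. apply Rle_abs. }
  assert (Hx4 : - (lam * eps2) <= lam * Rabs eps2).
  { replace (- (lam*eps2)) with (lam * (-eps2)) by ring. apply Rmult_le_compat_l; [lra|].
    rewrite <- Rabs_Ropp. apply Rle_abs. }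
  assert (0 <= lam*Rabs x) by (pose proof (Rabs_pos x); nra).
  assert (0 <= lam*Rabs eps2) by (pose proof (Rabs_pos eps2); nra).
  exists (-T). unfold FF.
  pose proof (hh_ge_z ss mm Hss Hmm (uu * - T + lam * x) ltac:(unfold B in *; nra)).
  pose proof (hh_ge_z ss mm Hss Hmm (uu * - T + lam * eps2) ltac:(unfold B in *; nra)).
  assert (uu = 1 + dd) by reflexivity.
  assert (0 <= (1-aa)*(hh ss mm (uu * - T + lam * x) - (uu * - T + lam * x))) by nra.
  assert (0 <= aa*(hh ss mm (uu * - T + lam * eps2) - (uu * - T + lam * eps2))) by nra.
  assert (0 <= (1-aa)*(lam*x + lam*Rabs x)) by nra.
  assert (0 <= aa*(lam*eps2 + lam*Rabs eps2)) by nra.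
  unfold B in *. nra.
Qed.

Lemma Sx_closed e : 0 <= dd -> (forall eta, 0 < eta -> Sx (e + eta)) -> Sx e.
Proof.
  intros Hd Hall. apply NNPP. intro Hn.
  assert (Hneg : forall P, FF ss mm aa uu (lam*e) (lam*eps2) P < 0).
  { intro P. apply Rnot_le_lt. intro HP. apply Hn. exists P. exact HP. }
  set (K1 := (zk ss mm - lam*e)/uu). set (K2 := (zk ss mm - lam*eps2)/uu).
  set (Phi := Rmax (FF ss mm aa uu (lam*e) (lam*eps2) K1) (FF ss mm aa uu (lam*e) (lam*eps2) K2)).
  assert (HPhi : Phi < 0) by (apply Rmax_lub_lt; apply Hneg).
  set (eta := - Phi / (2*lam)).
  assert (Heta : 0 < eta).
  { unfold eta. unfold Rdiv. apply Rmult_lt_0_compat. lra. apply Rinv_0_lt_compat. lra. }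
  destruct (Hall eta Heta) as [P HP].
  pose proof (FF_lip_b1 ss mm aa uu (lam*e) (lam*eps2) Hss Hmm Haa Huu Hsu (lam*(e+eta)) P
                ltac:(nra)).
  assert (lam * (e + eta) - lam * e = - Phi / 2) by (unfold eta; field; lra).
  assert (Hu1 : 1 <= uu) by (unfold uu; lra).
  destruct (FF_max ss mm aa uu (lam*e) (lam*eps2) P Hss Hmm Haa Hu1 Hsu) as [Hm|Hm];
    fold K1 K2 in Hm.
  - pose proof (Rmax_l (FF ss mm aa uu (lam*e) (lam*eps2) K1) (FF ss mm aa uu (lam*e) (lam*eps2) K2)).
    fold Phi in H1. lra.
  - pose proof (Rmax_r (FF ss mm aa uu (lam*e) (lam*eps2) K1) (FF ss mm aa uu (lam*e) (lam*eps2) K2)).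
    fold Phi in H1. lra.
Qed.

Lemma BRE_Sx e1 : 0 <= dd -> 1 <= p + q ->
  BRE_exists beta sigma lam mu psi M Mf N p q e1 eps2 -> Sx e1.
Proof.
  intros Hd Hpq1 H.
  destruct (Rle_dec e1 eps2) as [He|He]; [| apply Sx_nonneg; lra].
  destruct H as (x1 & pi1 & x2 & pi2 & [H1 H2] & [H3 H4]).
  pose proof Hpq2 as Hpq2. pose proof Haa as Ha. pose proof Huu as Hu.
  set (pie1 := p * pi1 + (1 - p) * pi2) in *.
  set (pie2 := (1 - q) * pi1 + q * pi2) in *.
  set (r1 := rate psi mu pi1) in *. set (r2 := rate psi mu pi2) in *.
  assert (Lx1 : lam * x1 = pi1 - Mf*beta*pie1) by lra.
  assert (Lx2 : lam * x2 = pi2 - Mf*beta*pie2) by lra.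
  set (Q := (1-aa)*pi1 + aa*pi2). set (D := pi1 - pi2).
  set (rho := p + q - 1). set (kap := rho * (uu + M*Mf*beta*(1-rho))).
  assert (G1 : pi1 + lam*sigma*r1 = uu*Q + lam*e1 + kap*aa*D).
  { assert (E : lam*x1 = lam*(M * (p * x1 + (1 - p) * x2) - sigma * (r1 - N * pie1) + e1))
      by (rewrite <- H1; reflexivity).
    replace (lam*(M * (p * x1 + (1 - p) * x2) - sigma * (r1 - N * pie1) + e1)) with
      (M*(p*(lam*x1) + (1-p)*(lam*x2)) - lam*sigma*r1 + lam*sigma*N*pie1 + lam*e1) in E by ring.
    rewrite Lx1, Lx2 in E.
    assert (pi1 + lam*sigma*r1 = M*(p*(pi1 - Mf*beta*pie1) + (1-p)*(pi2 - Mf*beta*pie2))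
                                 + (lam*sigma*N + Mf*beta)*pie1 + lam*e1) by lra.
    rewrite H. unfold Q, D, kap, rho, uu, dd, delta, aa, qbar, pie1, pie2. field. lra. }
  assert (G2 : pi2 + lam*sigma*r2 = uu*Q + lam*eps2 - kap*(1-aa)*D).
  { assert (E : lam*x2 = lam*(M * ((1 - q) * x1 + q * x2) - sigma * (r2 - N * pie2) + eps2))
      by (rewrite <- H3; reflexivity).
    replace (lam*(M * ((1 - q) * x1 + q * x2) - sigma * (r2 - N * pie2) + eps2)) with
      (M*((1-q)*(lam*x1) + q*(lam*x2)) - lam*sigma*r2 + lam*sigma*N*pie2 + lam*eps2) in E by ring.
    rewrite Lx1, Lx2 in E.
    assert (pi2 + lam*sigma*r2 = M*((1-q)*(pi1 - Mf*beta*pie1) + q*(pi2 - Mf*beta*pie2))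
                                 + (lam*sigma*N + Mf*beta)*pie2 + lam*eps2) by lra.
    rewrite H. unfold Q, D, kap, rho, uu, dd, delta, aa, qbar, pie1, pie2. field. lra. }
  assert (P1 : pi1 = hh ss mm (uu*Q + lam*e1 + kap*aa*D)) by (rewrite <- G1; unfold r1; rewrite gh1'; reflexivity).
  assert (P2 : pi2 = hh ss mm (uu*Q + lam*eps2 - kap*(1-aa)*D)) by (rewrite <- G2; unfold r2; rewrite gh1'; reflexivity).
  assert (Hrho : 0 <= rho <= 1) by (unfold rho; lra).
  assert (HMMf : 0 < M*Mf*beta) by (apply Rmult_lt_0_compat; [nra|lra]).
  assert (HMMf1 : M*Mf*beta <= uu).
  { unfold uu, dd, delta. assert (0 < Mf*beta < 1) by (split; nra).
    assert (0 < lam*sigma*N) by (apply Rmult_lt_0_compat; nra). nra. }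
  assert (0 <= M*Mf*beta*(1-rho)) by (apply Rmult_le_pos; lra).
  assert (Hk0 : 0 <= kap) by (unfold kap; apply Rmult_le_pos; lra).
  assert (Hk1 : kap <= uu).
  { assert (uu - kap = (1-rho)*(uu - rho*(M*Mf*beta))) by (unfold kap; ring).
    assert (rho*(M*Mf*beta) <= M*Mf*beta) by nra.
    assert (0 <= (1-rho)*(uu - rho*(M*Mf*beta))) by (apply Rmult_le_pos; lra). lra. }
  assert (EQ1 : pi1 = Q + aa*D) by (unfold Q, D; ring).
  assert (EQ2 : pi2 = Q - (1-aa)*D) by (unfold Q, D; ring).
  destruct (Rlt_le_dec 0 D) as [HD|HD].
  - exists pi1. unfold FF.
    assert (A1 : pi1 <= hh ss mm (uu*pi1 + lam*e1)).
    { rewrite P1 at 1. apply hh_mono; auto using Hss, Hmm.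
      rewrite EQ1. assert (0 <= (uu-kap)*(aa*D)) by (apply Rmult_le_pos; [lra| apply Rmult_le_pos; lra]). nra. }
    assert (A2 : pi1 <= hh ss mm (uu*pi1 + lam*eps2)).
    { rewrite P1 at 1. apply hh_mono; auto using Hss, Hmm.
      rewrite EQ1. assert (0 <= (uu-kap)*(aa*D)) by (apply Rmult_le_pos; [lra| apply Rmult_le_pos; lra]). nra. }
    nra.
  - exists Q. unfold FF.
    set (y1 := uu*Q + lam*e1). set (y2 := uu*Q + lam*eps2).
    set (z1 := uu * Q + lam * e1 + kap * aa * D) in *.
    set (z2 := uu * Q + lam * eps2 - kap * (1 - aa) * D) in *.
    assert (Hz1 : z1 <= y1) by (unfold z1, y1; assert (0 <= kap*aa*(-D)) by (apply Rmult_le_pos; nra); nra).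
    assert (Hz2 : y2 <= z2) by (unfold z2, y2; assert (0 <= kap*(1-aa)*(-D)) by (apply Rmult_le_pos; nra); nra).
    assert (Hy : y1 <= y2) by (unfold y1, y2; nra).
    assert (HQ : Q = (1-aa)*hh ss mm z1 + aa*hh ss mm z2) by (unfold Q; rewrite <- P1, <- P2; ring).
    destruct (Rle_dec y1 (zk ss mm)) as [Hy1|Hy1].
    + assert (B1 : hh ss mm y1 - hh ss mm z1 = y1 - z1).
      { rewrite (hh_left ss mm Hss Hmm y1), (hh_left ss mm Hss Hmm z1) by lra. ring. }
      pose proof (hh_up ss mm Hss Hmm y2 z2 Hz2) as B2.
      assert (C1 : (1-aa)*(hh ss mm y1 - hh ss mm z1) = (1-aa)*(y1 - z1)) by (rewrite B1; ring).
      assert (C2 : aa*(hh ss mm z2 - hh ss mm y2) <= aa*(z2 - y2)) by (apply Rmult_le_compat_l; lra).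
      assert (C3 : (1-aa)*(y1 - z1) - aa*(z2-y2) = 0) by (unfold y1, y2, z1, z2; ring).
      rewrite HQ. nra.
    + assert (B2 : hh ss mm z2 - hh ss mm y2 = ss*(z2 - y2)).
      { rewrite (hh_right ss mm Hss Hmm y2), (hh_right ss mm Hss Hmm z2) by lra. ring. }
      pose proof (hh_low ss mm Hss Hmm z1 y1 Hz1) as B1.
      assert (C1 : (1-aa)*(ss*(y1 - z1)) <= (1-aa)*(hh ss mm y1 - hh ss mm z1)) by (apply Rmult_le_compat_l; lra).
      assert (C2 : aa*(hh ss mm z2 - hh ss mm y2) = aa*(ss*(z2 - y2))) by (rewrite B2; ring).
      assert (C3 : (1-aa)*(ss*(y1 - z1)) - aa*(ss*(z2-y2)) = 0) by (unfold y1, y2, z1, z2; ring).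
      rewrite HQ. nra.
Qed.

Lemma main_core :
  exists eRPE : option R,
    (forall eps1 : R,
       BRRPE_exists beta sigma lam mu psi M Mf N p q eps1 eps2 <-> ge_thr eps1 eRPE) /\
    (delta beta sigma lam M Mf N < 0 -> eRPE = None) /\
    (forall eBR : option R,
       (forall eps1 : R,
          BRE_exists beta sigma lam mu psi M Mf N p q eps1 eps2 <-> ge_thr eps1 eBR) ->
       ((0 <= delta beta sigma lam M Mf N /\ 1 <= p + q) \/
        delta beta sigma lam M Mf N < 0) ->
       le_thr eRPE eBR).
Proof.
  destruct (classic (forall e, Sx e)) as [Hall|Hnall].
  - exists None. split; [|split].
    + intro e. rewrite RPE_Sx. simpl. split; auto.
    + reflexivity.
    + intros. simpl. exact I.
  - assert (Hd : 0 <= dd).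
    { destruct (Rle_dec 0 dd); auto. exfalso. apply Hnall. intro. apply Sx_neg. lra. }
    destruct (not_all_ex_not _ _ Hnall) as [e0 He0].
    set (E := fun y => Sx (-y)).
    assert (Hb : bound E).
    { exists (-e0). intros y Hy. unfold E in Hy.
      destruct (Rle_dec y (-e0)); auto. exfalso. apply He0. apply (Sx_up (-y)); auto. lra. }
    assert (Hne : exists y, E y).
    { exists 0. unfold E. apply Sx_nonneg. lra. }
    destruct (completeness E Hb Hne) as [mx [Hub Hlub]].
    set (e := - mx).
    assert (Hcl : Sx e).
    { apply Sx_closed; auto. intros eta Heta.
      apply NNPP. intro Hn.
      assert (is_upper_bound E (mx - eta)).
      { intros y Hy. unfold E in Hy. destruct (Rle_dec (-y) (e + eta)).
        - exfalso. apply Hn. apply (Sx_up (-y)); auto.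
        - unfold e in n. lra. }
      specialize (Hlub _ H). lra. }
    assert (Hchar : forall x, Sx x <-> e <= x).
    { intro x. split.
      - intro Hx. assert (E (-x)) by (unfold E; rewrite Ropp_involutive; exact Hx).
        specialize (Hub _ H). unfold e. lra.
      - intro Hx. apply (Sx_up e); auto. }
    exists (Some e). split; [|split].
    + intro x. rewrite RPE_Sx, Hchar. simpl. tauto.
    + intro Hlt. exfalso. fold dd in Hlt. lra.
    + intros eBR HBR Hcond.
      assert (Himp : forall x, BRE_exists beta sigma lam mu psi M Mf N p q x eps2 -> Sx x).
      { intros x Hx. destruct Hcond as [[H1 H2]|H1].
        - apply BRE_Sx; auto.
        - apply Sx_neg. exact H1. }
      destruct eBR as [b|].
      * simpl. apply Hchar. apply Himp. apply HBR. simpl. lra.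
      * exfalso. apply Hnall. intro x. apply Himp. apply HBR. simpl. exact I.
Qed.
End Model.

Theorem proposition6
  (beta sigma lam mu psi M Mf N p q eps2 : R)
  (Hbeta : 0 < beta < 1) (Hsigma : 0 < sigma) (Hlam : 0 < lam) (Hmu : 0 < mu)
  (Hpsi : 1 < psi)
  (HM : 0 < M <= 1) (HMf : 0 < Mf <= 1) (HN : 0 < N <= 1)
  (Hp : 0 < p <= 1) (Hq : 0 < q <= 1) (Hpq : ~ (p = 1 /\ q = 1))
  (Hmin : Rmin M (Rmin Mf N) < 1) (Heps2 : 0 <= eps2) :
  exists eRPE : option R,
    (* (i) *)
    (forall eps1 : R,
       BRRPE_exists beta sigma lam mu psi M Mf N p q eps1 eps2 <-> ge_thr eps1 eRPE) /\
    (* (ii) *)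
    (delta beta sigma lam M Mf N < 0 -> eRPE = None) /\
    (* (iii) *)
    (forall eBR : option R,
       (forall eps1 : R,
          BRE_exists beta sigma lam mu psi M Mf N p q eps1 eps2 <-> ge_thr eps1 eBR) ->
       ((0 <= delta beta sigma lam M Mf N /\ 1 <= p + q) \/
        delta beta sigma lam M Mf N < 0) ->
       le_thr eRPE eBR).
Proof.
  exact (main_core beta sigma lam mu psi M Mf N p q eps2 Hbeta Hsigma Hlam Hmu Hpsi
           HM HMf HN Hp Hq Hpq Heps2).
Qed.
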